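(* For every graph $G$, $\mathrm{cop}(G^+)\ge \mathrm{cop}(G)$; that is, clique substitution does not decrease the cop number.
   Context: All graphs are finite, undirected, without loops or multiple edges; $N(v)$ is the set of neighbours of $v$. Clique substitution at a vertex $v$ replaces $v$ by a clique of size $|N(v)|$ and adds a perfect matching between the vertices of this clique and $N(v)$. $G^+$ is the graph obtained from $G$ by clique substitution at every vertex: formally $V(G^+)=\bigcup_{v\in V(G)}(\{v\}\times N(v))$, and $(v_1,u_1)$, $(v_2,u_2)$ are adjacent iff $v_1=v_2$, or $v_1=u_2$ and $u_1=v_2$. Cops and Robber game on a connected graph: for an integer $k\ge 1$, the cop player places $k$ cops on (not necessarily distinct) vertices, then the robber is placed on a vertex; then, starting with the cops, the players alternate moves. In a cop move, each cop either stays or moves to an adjacent vertex; in a robber move, the robber stays or moves to an adjacent vertex. The cops win if at some point a cop and the robber occupy the same vertex. Both players have complete information. The cop number $\mathrm{cop}(G)$ of a connected graph $G$ is the smallest $k$ such that the cops have a winning strategy with $k$ cops; for a non-connected graph it is the maximum cop number of its connected components. *)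

(* Defs.v *)
From mathcomp Require Import all_boot.
From mathcomp Require Import boolp.

Set Implicit Arguments.
Unset Strict Implicit.
Unset Printing Implicit Defensive.

(* A (finite simple) graph is given by a vertex type T : finType and an
   adjacency relation e : rel T, assumed symmetric and irreflexive in the
   theorem statement. *)

(** Clique substitution G^+ : vertices are pairs (v,u) with u in N(v);
    (v1,u1) ~ (v2,u2) iff they are distinct and (v1 = v2, or v1 = u2 and
    u1 = v2). *)
Definition cs_vert (T : finType) (e : rel T) : finType :=
  {p : T * T | e p.1 p.2}.

Definition cs_adj (T : finType) (e : rel T) : rel (cs_vert e) :=
  fun p q => (p != q) &&
    (((val p).1 == (val q).1) || (((val p).1 == (val q).2) && ((val p).2 == (val q).1))).

(** The Cops and Robber game with k cops.
    [cwin e k b c r] : the cops can force a capture from the position where the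
    cops are at c, the robber at r, and it is the cops' turn iff b = true.
    (Least fixed point = cops win in finitely many moves = winning strategy
    in this finite reachability game.) *)
Inductive cwin (T : finType) (e : rel T) (k : nat) :
    bool -> {ffun 'I_k -> T} -> T -> Prop :=
| cw_cap b (c : {ffun 'I_k -> T}) r :
    (exists i, c i = r) -> cwin e b c r
| cw_cop (c c' : {ffun 'I_k -> T}) r :
    (forall i, c' i = c i \/ e (c i) (c' i)) ->
    cwin e false c' r -> cwin e true c r
| cw_rob (c : {ffun 'I_k -> T}) r :
    (forall r', r' = r \/ e r r' -> cwin e true c r') -> cwin e false c r.

Definition cops_win_on (T : finType) (e : rel T) (C : {set T}) (k : nat) : Prop :=
  exists c : {ffun 'I_k -> T},
    (forall i, c i \in C) /\ forall r, r \in C -> cwin e true c r.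

(** Cop number of a connected component C: least k >= 1 such that k cops win.
    Since #|C| <= #|T| cops always win (one on each vertex), the minimum over
    k < #|T|.+2 is the true minimum. *)
Definition copnum_comp (T : finType) (e : rel T) (C : {set T}) : nat :=
  \big[minn/#|T|.+1]_(k < #|T|.+2 | `[< (1 <= k)%N /\ cops_win_on e C k >]) (k : nat).

(** Cop number of a graph: maximum over its connected components
    (0 for the empty graph). *)
Definition copnum (T : finType) (e : rel T) : nat :=
  \max_(x : T) copnum_comp e [set y | connect e x y].

(* Main.v *)
Require Import Defs.
From mathcomp Require Import all_boot.
From mathcomp Require Import boolp.
From Stdlib Require Import Classical.
Set Implicit Arguments.
Unset Strict Implicit.
Unset Printing Implicit Defensive.

Definition pr (T : finType) (e : rel T) (p : cs_vert e) : T := (val p).1.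
Definition nearv (T : finType) (e : rel T) (r v : T) := v = r \/ e v r.
Definition stepc (T : finType) (e : rel T) k (c c' : {ffun 'I_k -> T}) :=
  forall i, c' i = c i \/ e (c i) (c' i).
Definition Lw (T : finType) (e : rel T) k (c : {ffun 'I_k -> T}) r :=
  ~ cwin e true c r.

Lemma Lsafe (T : finType) (e : rel T) k (c : {ffun 'I_k -> T}) r :
  Lw e c r -> forall i, ~ nearv e r (c i).
Proof.
move=> HL i [Hi|Hi]; apply: HL.
- apply: cw_cap; by exists i.
- apply: (@cw_cop _ _ _ c [ffun j => if j == i then r else c j]).
  + move=> j; rewrite ffunE; case: eqP => [->|_]; by [right|left].
  + apply: cw_cap; exists i; by rewrite ffunE eqxx.
Qed.

Lemma adj_in12 (T : finType) (e : rel T) (p q : cs_vert e) :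
  q = p \/ cs_adj p q -> pr q = (val p).1 \/ pr q = (val p).2.
Proof.
rewrite /pr /cs_adj; case=> [->|/andP [_ /orP [/eqP->|/andP [/eqP -> /eqP ->]]]].
- by left.
- by left.
- by right.
Qed.

Lemma adj_sym (T : finType) (e : rel T) (p q : cs_vert e) :
  cs_adj p q = cs_adj q p.
Proof.
rewrite /cs_adj eq_sym; congr andb; congr orb; first by rewrite eq_sym.
by rewrite andbC eq_sym [(val q).2 == _]eq_sym.
Qed.

Lemma two_step (T : finType) (e : rel T) (a b d : cs_vert e) :
  (b = d \/ cs_adj d b) -> (a = b \/ cs_adj b a) ->
  pr a = pr d \/ e (pr d) (pr a).
Proof.
move=> Hdb Hab.
have hd : e (val d).1 (val d).2 := valP d.
have hb : e (val b).1 (val b).2 := valP b.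
rewrite /pr.
case: (adj_in12 Hab); rewrite /pr => ->.
- case: Hdb => [->|/andP [_ /orP [/eqP h1|/andP [/eqP h1 /eqP h2]]]].
  + by left.
  + by left.
  + by right; rewrite -h2.
- case: Hdb => [->|/andP [_ /orP [/eqP h1|/andP [/eqP h1 /eqP h2]]]].
  + by right.
  + by right; rewrite h1.
  + by left.
Qed.

Lemma near12 (T : finType) (e : rel T) (e_sym : symmetric e) (a b r v : T) :
  e a b -> (a = r \/ b = r) -> (v = a \/ v = b) -> nearv e r v.
Proof.
move=> hab [<-|<-] [->|->]; rewrite /nearv; auto.
by right; rewrite e_sym.
Qed.

Definition Inv (T : finType) (e : rel T) k (b : bool)
    (cp : {ffun 'I_k -> cs_vert e}) (p : cs_vert e) : Prop :=
  if b then
    (exists (c : {ffun 'I_k -> T}) r (cp0 : {ffun 'I_k -> cs_vert e}), Lw e c r /\ pr p = r /\ stepc (@cs_adj T e) cp0 cp /\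
        (forall i, pr (cp0 i) = c i))
    \/ (exists (c : {ffun 'I_k -> T}) r, Lw e c r /\ (forall i, pr (cp i) = c i) /\
        ((val p).1 = r \/ (val p).2 = r))
  else
    (exists (c : {ffun 'I_k -> T}) r (cp0 cp1 : {ffun 'I_k -> cs_vert e}), Lw e c r /\ pr p = r /\ stepc (@cs_adj T e) cp0 cp1 /\
        stepc (@cs_adj T e) cp1 cp /\ (forall i, pr (cp0 i) = c i))
    \/ (exists (c : {ffun 'I_k -> T}) r (cp1 : {ffun 'I_k -> cs_vert e}), Lw e c r /\ (forall i, pr (cp1 i) = c i) /\
        stepc (@cs_adj T e) cp1 cp /\ ((val p).1 = r \/ (val p).2 = r)).

Lemma back (T : finType) (e : rel T) (x y z : cs_vert e) :
  y = x \/ cs_adj x y -> y = z -> x = z \/ cs_adj z x.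
Proof.
move=> [->|h] <-; first by left.
by right; rewrite adj_sym.
Qed.

Lemma key (T : finType) (e : rel T) (e_sym : symmetric e) k b
    (cp : {ffun 'I_k -> cs_vert e}) p :
  cwin (@cs_adj T e) b cp p -> Inv b cp p -> False.
Proof.
elim=> {b cp p}.
- move=> b cp p [i Hi]; case: b => /=
   [[[c [r [cp0 [HL [Hp [Hs Hc]]]]]] | [c [r [HL [Hc Hp]]]]]
   | [[c [r [cp0 [cp1 [HL [Hp [Hs0 [Hs1 Hc]]]]]]]] | [c [r [cp1 [HL [Hc [Hs Hp]]]]]]]].
  + apply: (Lsafe (i:=i) HL); rewrite -Hc.
    apply: (near12 e_sym (valP p) _ (adj_in12 (back (Hs i) Hi))).
    by left.
  + apply: (Lsafe (i:=i) HL); rewrite -Hc Hi.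
    apply: (near12 e_sym (valP p) Hp); by left.
  + apply: HL.
    apply: (@cw_cop _ _ _ c [ffun i => pr (cp i)]).
    * move=> j; rewrite ffunE -Hc; exact: (two_step (Hs0 j) (Hs1 j)).
    * apply: cw_cap; exists i; by rewrite ffunE Hi.
  + apply: (Lsafe (i:=i) HL); rewrite -Hc.
    exact: (near12 e_sym (valP p) Hp (adj_in12 (back (Hs i) Hi))).
- move=> cp cp' p Hs _ IH
   [[c [r [cp0 [HL [Hp [Hs0 Hc]]]]]] | [c [r [HL [Hc Hp]]]]]; apply: IH => /=.
  + left; exists c, r, cp0, cp; by split.
  + right; exists c, r, cp; by split.
- move=> cp p _ IH
   [[c [r [cp0 [cp1 [HL [Hp [Hs0 [Hs1 Hc]]]]]]]] | [c [r [cp1 [HL [Hc [Hs Hp]]]]]]].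
  + pose D := [ffun i => pr (cp i)].
    have Hst : forall j, D j = c j \/ e (c j) (D j).
      move=> j; rewrite ffunE -Hc; exact: (two_step (Hs0 j) (Hs1 j)).
    have HnD : ~ cwin e false D r.
      by move=> h; apply: HL; exact: cw_cop Hst h.
    have [r' [Hr' HL']] : exists r', (r' = r \/ e r r') /\ ~ cwin e true D r'.
      apply: NNPP => hn; apply: HnD; apply: cw_rob => r' hr'.
      apply: NNPP => hw; apply: hn; by exists r'.
    case: Hr' => [Er | Er].
    * apply: (IH p (or_introl erefl)); right; exists D, r'.
      split => //; split; first by move=> i; rewrite ffunE.
      by left; rewrite Er.
    * have hv : e (r, r').1 (r, r').2 := Er.
      pose p' := exist (fun q : T * T => is_true (e q.1 q.2)) (r, r') hv : cs_vert e.
      apply: (IH p').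
        case: (eqVneq p p') => [<-|hne]; first by left.
        right; rewrite /cs_adj hne /=; apply/orP; left; by rewrite -Hp.
      right; exists D, r'; split => //; split; first by move=> i; rewrite ffunE.
      by right.
  + case: (eqVneq (val p).1 r) => [E1 | N1].
    * apply: (IH p (or_introl erefl)); left; exists c, r, cp1; by split.
    * have Hp2 : (val p).2 = r.
        by case: Hp => // h; rewrite h eqxx in N1.
      have hv : e (r, (val p).1).1 (r, (val p).1).2.
        by rewrite /= -Hp2 e_sym; exact: (valP p).
      pose p' := exist (fun q : T * T => is_true (e q.1 q.2)) (r, (val p).1) hv : cs_vert e.
      apply: (IH p').
        right; rewrite /cs_adj; apply/andP; split.
          apply/negP => /eqP h; move/negP: N1; apply; by rewrite h /=.
        by apply/orP; right; rewrite /= eqxx Hp2 eqxx.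
      left; exists c, r, cp1; by split.
Qed.

Definition mkv (T : finType) (e : rel T) (a b : T) (h : e a b) : cs_vert e :=
  exist (fun q : T * T => is_true (e q.1 q.2)) (a, b) h.

Lemma proj_connect (T : finType) (e : rel T) (p q : cs_vert e) :
  connect (@cs_adj T e) p q -> connect e (val p).1 (val q).1.
Proof.
move=> /connectP [s Hs ->]; elim: s p Hs => [|z s IH] p /=; first by rewrite connect0.
move=> /andP [Hpz Hs]; apply: connect_trans (IH z Hs).
move: Hpz; rewrite /cs_adj => /andP [_ /orP [/eqP ->|/andP [_ /eqP <-]]].
- exact: connect0.
- apply: connect1; exact: (valP p).
Qed.

Lemma same_clique (T : finType) (e : rel T) (p q : cs_vert e) :
  (val p).1 = (val q).1 -> connect (@cs_adj T e) p q.
Proof.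
move=> h; case: (eqVneq p q) => [->|hne]; first exact: connect0.
by apply: connect1; rewrite /cs_adj hne h eqxx.
Qed.

Lemma lift_connect (T : finType) (e : rel T) (e_sym : symmetric e)
    (e_irr : irreflexive e) (a b a' b' : T) (ha : e a a') (hb : e b b') :
  connect e a b -> connect (@cs_adj T e) (mkv ha) (mkv hb).
Proof.
move=> /connectP [s Hs Eb]; elim: s a a' ha Hs Eb => [|w s IH] a a' ha /=.
- by move=> _ Eb; subst b; apply: same_clique.
- move=> /andP [Haw Hs] Eb.
  have hwa : e w a by rewrite e_sym.
  apply: (connect_trans (same_clique (p := @mkv T e a a' ha) (q := @mkv T e a w Haw) erefl)).
  apply: connect_trans (IH w a hwa Hs Eb).
  apply: connect1; apply/andP; split; last first.
    by apply/orP; right; rewrite !eqxx.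
  apply/negP => /eqP h; have /= E := congr1 (fun q : cs_vert e => (val q).1) h.
  by move: (Haw); rewrite E e_irr.
Qed.

Lemma transfer (T : finType) (e : rel T) (e_sym : symmetric e)
    (e_irr : irreflexive e) x y (hxy : e x y) k :
  cops_win_on (@cs_adj T e) [set q | connect (@cs_adj T e) (mkv hxy) q] k ->
  cops_win_on e [set z | connect e x z] k.
Proof.
move=> [cp [Hcp Hw]].
exists [ffun i => pr (cp i)]; split.
- move=> i; rewrite ffunE inE; have := Hcp i; rewrite inE => /proj_connect h.
  exact: h.
- move=> r; rewrite inE => Hr; apply: NNPP => HL.
  have [z hz] : exists z, e r z.
    have : connect e r x by rewrite (sym_connect_sym e_sym).
    move/connectP => [[|z s] /= Hs Ex].
    + by exists y; rewrite -Ex.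
    + by move/andP: Hs => [hz _]; exists z.
  have Hp : mkv hz \in [set q | connect (@cs_adj T e) (mkv hxy) q].
    by rewrite inE; apply: lift_connect.
  apply: (key e_sym (Hw _ Hp)).
  left; exists [ffun i => pr (cp i)], r, cp.
  split => //; split => //; split; first by move=> i; left.
  by move=> i; rewrite ffunE.
Qed.

Lemma bigmin_le_seq (I : eqType) (r : seq I) (Q : pred I) (F : I -> nat) d j :
  j \in r -> Q j -> \big[minn/d]_(i <- r | Q i) F i <= F j.
Proof.
move=> + Qj; elim: r => //= a s IH; rewrite inE big_cons.
case/orP => [/eqP Ea|hj].
- by subst a; rewrite Qj geq_minl.
- case: (Q a); last exact: IH.
  by rewrite geq_min IH ?orbT.
Qed.

Lemma bigmin_le_d (I : Type) (r : seq I) (Q : pred I) (F : I -> nat) d :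
  \big[minn/d]_(i <- r | Q i) F i <= d.
Proof.
elim: r => [|a s IH]; first by rewrite big_nil.
rewrite big_cons; case: (Q a) => //.
exact: leq_trans (geq_minr _ _) IH.
Qed.

Lemma bigmin_mem (I : Type) (r : seq I) (Q : pred I) (F : I -> nat) d :
  \big[minn/d]_(i <- r | Q i) F i = d \/
  exists2 j, Q j & \big[minn/d]_(i <- r | Q i) F i = F j.
Proof.
apply: (big_ind (fun v => v = d \/ exists2 j, Q j & v = F j)).
- by left.
- move=> u v Hu Hv; case: (leqP u v) => h.
  + exact: Hu.
  + exact: Hv.
- by move=> i Qi; right; exists i.
Qed.

Lemma cover (T : finType) (e : rel T) (C : {set T}) x0 k :
  x0 \in C -> #|C| <= k -> cops_win_on e C k.
Proof.
move=> Hx0 Hk.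
exists [ffun i : 'I_k => nth x0 (enum C) i]; split.
- move=> i; rewrite ffunE; case: (ltnP i (size (enum C))) => h.
  + by rewrite -mem_enum mem_nth.
  + by rewrite nth_default.
- move=> r Hr; apply: cw_cap.
  have hi : index r (enum C) < k.
    by rewrite (leq_trans _ Hk) // cardE index_mem mem_enum.
  by exists (Ordinal hi); rewrite ffunE /= nth_index ?mem_enum.
Qed.

Lemma comp_le (T : finType) (e : rel T) (C : {set T}) j :
  (1 <= j)%N -> cops_win_on e C j -> copnum_comp e C <= j.
Proof.
move=> h1 hw; rewrite /copnum_comp.
case: (ltnP j #|T|.+2) => hj.
- have := @bigmin_le_seq _ (index_enum 'I_#|T|.+2)
    (fun k : 'I_#|T|.+2 => `[< (1 <= k)%N /\ cops_win_on e C k >])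
    (fun k : 'I_#|T|.+2 => (k : nat)) #|T|.+1 (Ordinal hj)
    (mem_index_enum (Ordinal hj)).
  by apply; apply/asboolP.
- apply: leq_trans (bigmin_le_d _ _ _ _) _; exact: ltnW.
Qed.

Lemma comp_mem (T : finType) (e : rel T) (C : {set T}) :
  copnum_comp e C = #|T|.+1 \/
  exists j, [/\ (1 <= j)%N, j < #|T|.+2, cops_win_on e C j & copnum_comp e C = j].
Proof.
rewrite /copnum_comp.
case: (bigmin_mem (index_enum 'I_#|T|.+2)
    (fun k : 'I_#|T|.+2 => `[< (1 <= k)%N /\ cops_win_on e C k >])
    (fun k : 'I_#|T|.+2 => (k : nat)) #|T|.+1) => [->|[j /asboolP [h1 h2] ->]].
- by left.
- by right; exists j; split.
Qed.

Theorem lemma7 (T : finType) (e : rel T)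
    (e_sym : symmetric e) (e_irr : irreflexive e)
    (e_edge : exists x y, e x y) :
  copnum e <= copnum (@cs_adj T e).
Proof.
have [x0 [y0 h0]] := e_edge.
have ge1 : forall C : {set cs_vert e}, 1 <= copnum_comp (@cs_adj T e) C.
  move=> C; case: (comp_mem (@cs_adj T e) C) => [->|[j [h1 _ _ ->]]] //.
rewrite /copnum; apply/bigmax_leqP => x _.
case: (classic (exists y, e x y)) => [[y hxy] | hno].
- apply: leq_trans (leq_bigmax (mkv hxy)).
  set Cp := [set q | connect (@cs_adj T e) (mkv hxy) q].
  have Vpos : 0 < #|cs_vert e| by apply/card_gt0P; exists (mkv hxy).
  have Hk0 : copnum_comp (@cs_adj T e) Cp <= #|cs_vert e|.
    apply: comp_le => //; apply: (@cover _ _ _ (mkv hxy)).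
    + by rewrite inE connect0.
    + exact: max_card.
  case: (comp_mem (@cs_adj T e) Cp) => [Eq | [j [h1 _ hw ->]]].
    by move: Hk0; rewrite Eq ltnn.
  by apply: comp_le h1 _; apply: (transfer e_sym e_irr hw).
- apply: (@leq_trans 1).
  + apply: comp_le => //.
    exists [ffun _ => x]; split.
    * by move=> i; rewrite ffunE inE connect0.
    * move=> r; rewrite inE => /connectP [[|z s] /= Hs ->].
        by apply: cw_cap; exists ord0; rewrite ffunE.
      by move/andP: Hs => [hz _]; case: hno; exists z.
  + exact: leq_trans (ge1 [set q | connect (@cs_adj T e) (mkv h0) q])
      (leq_bigmax (mkv h0)).
Qed.
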